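(* Let $\mathscr{P}$ be a stationary ergodic stochastic process over a finite alphabet $\Sigma$. The set $\overline{Q}^+$ of atomic accumulation causal states of $\mathscr{P}$ is closed under translation: if $\nu\in\overline{Q}^+$ and $\sigma\in\Sigma$ with $\nu(\sigma\Sigma^\omega)>0$, then $\nu_\sigma\in\overline{Q}^+$.
   Context: $\mathcal{M}_\Sigma$ denotes the set of probability measures on $\Sigma^\omega$ with the $\sigma$-field generated by the cylinders $x\Sigma^\omega$, $x\in\Sigma^\star$. For $x=\sigma_1\cdots\sigma_n$, $Pr(x)=Pr(X_1\cdots X_n=\sigma_1\cdots\sigma_n)$; for $Pr(x)>0$, $\mu_x\in\mathcal{M}_\Sigma$ is given by $\mu_x(y\Sigma^\omega)=Pr(xy)/Pr(x)$; causal states are the classes $[x]$ of sequences with $Pr(x)>0$ under $x\sim y\iff\mu_x=\mu_y$, and $\mu_{[x]}=\mu_x$. For $\nu\in\mathcal{M}_\Sigma$, $d\in\mathbb{N}^+$, $\varepsilon>0$: $B_{d,\varepsilon}(\nu)=\{\nu'\in\mathcal{M}_\Sigma:\sum_{x\in\Sigma^d}|\nu'(x\Sigma^\omega)-\nu(x\Sigma^\omega)|<\varepsilon\}$, and $p_{l,d,\varepsilon}(\nu)=\sum\{Pr(x):x\in\Sigma^l,\ Pr(x)>0,\ \mu_{[x]}\in B_{d,\varepsilon}(\nu)\}$. $\nu$ is an accumulation causal state if $p_{d,\varepsilon}(\nu):=\liminf_{l\to\infty}p_{l,d,\varepsilon}(\nu)>0$ for all $d,\varepsilon$; then $p(\nu)=\lim_{d\to\infty}\lim_{\varepsilon\to0}p_{d,\varepsilon}(\nu)$,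 and $\nu$ is atomic if $p(\nu)>0$. $\overline{Q}^+$ is the set of atomic accumulation causal states. For $\nu(\sigma\Sigma^\omega)>0$, the translation $\nu_\sigma\in\mathcal{M}_\Sigma$ is given by $\nu_\sigma(x\Sigma^\omega)=\nu(\sigma x\Sigma^\omega)/\nu(\sigma\Sigma^\omega)$. *)

(* Defs.v *)
From HB Require Import structures.
From mathcomp Require Import all_boot all_order all_algebra.
From mathcomp Require Import all_classical all_reals all_analysis.
Set Implicit Arguments. Unset Strict Implicit. Unset Printing Implicit Defensive.
Import Order.TTheory GRing.Theory Num.Theory.
Import numFieldNormedType.Exports.
Local Open Scope classical_set_scope.
Local Open Scope ring_scope.

(* The point s0 is only used to equip the type with a pointedType
   structure (required by the generated sigma-algebra construction). *)
Definition word (Sigma : finType) (s0 : Sigma) := nat -> Sigma.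
HB.instance Definition _ (Sigma : finType) (s0 : Sigma) :=
  Choice.on (word s0).
HB.instance Definition _ (Sigma : finType) (s0 : Sigma) :=
  isPointed.Build (word s0) (fun _ => s0).

Definition cyl (Sigma : finType) (s0 : Sigma) (x : seq Sigma) : set (word s0) :=
  [set w | forall i, (i < size x)%N -> w i = nth s0 x i].

Arguments cyl {Sigma} s0 x.

Definition cylinders (Sigma : finType) (s0 : Sigma) : set (set (word s0)) :=
  [set cyl s0 x | x in [set: seq Sigma]].

Arguments cylinders {Sigma} s0.

Definition Omega (Sigma : finType) (s0 : Sigma) :=
  g_sigma_algebraType (cylinders s0).

Arguments Omega {Sigma} s0.

Notation MS s0 R := (probability (Omega s0) R).

Definition shift (Sigma : finType) (s0 : Sigma) (w : Omega s0) : Omega s0 :=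
  fun n => w n.+1.

Definition stationary (Sigma : finType) (s0 : Sigma) (R : realType)
  (P : MS s0 R) : Prop :=
  forall A : set (Omega s0), measurable A -> P (shift (s0:=s0) @^-1` A) = P A.

Definition ergodic (Sigma : finType) (s0 : Sigma) (R : realType)
  (P : MS s0 R) : Prop :=
  forall A : set (Omega s0), measurable A -> shift (s0:=s0) @^-1` A = A ->
    P A = 0%E \/ P A = 1%E.

Definition cylm (Sigma : finType) (s0 : Sigma) (R : realType)
  (nu : MS s0 R) (x : seq Sigma) : R := fine (nu (cyl s0 x)).

(* cylinder values of mu_x : mu_x(y Sigma^omega) = Pr(xy)/Pr(x) *)
Definition mu_cyl (Sigma : finType) (s0 : Sigma) (R : realType)
  (P : MS s0 R) (x : seq Sigma) (y : seq Sigma) : R :=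
  cylm P (x ++ y) / cylm P x.

Definition inB (Sigma : finType) (s0 : Sigma) (R : realType)
  (f : seq Sigma -> R) (d : nat) (eps : R) (nu : MS s0 R) : bool :=
  \sum_(y : d.-tuple Sigma) `| f y - cylm nu y | < eps.

Definition p_ldeps (Sigma : finType) (s0 : Sigma) (R : realType)
  (P : MS s0 R) (l d : nat) (eps : R) (nu : MS s0 R) : R :=
  \sum_(x : l.-tuple Sigma | (0 < cylm P x) && inB (mu_cyl P x) d eps nu)
     cylm P x.

Definition p_deps (Sigma : finType) (s0 : Sigma) (R : realType)
  (P : MS s0 R) (d : nat) (eps : R) (nu : MS s0 R) : R :=
  limn_inf (fun l => p_ldeps P l d eps nu).

Definition accumulation_causal_state (Sigma : finType) (s0 : Sigma)
  (R : realType) (P : MS s0 R) (nu : MS s0 R) : Prop :=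
  forall (d : nat) (eps : R), (0 < d)%N -> 0 < eps -> 0 < p_deps P d eps nu.

Definition p_atom (Sigma : finType) (s0 : Sigma) (R : realType)
  (P : MS s0 R) (nu : MS s0 R) : R :=
  limn (fun d => lim ((fun eps => p_deps P d eps nu) x @[x --> 0^'+])).

Definition in_Qbar_plus (Sigma : finType) (s0 : Sigma) (R : realType)
  (P : MS s0 R) (nu : MS s0 R) : Prop :=
  accumulation_causal_state P nu /\ 0 < p_atom P nu.

(* Main.v *)
Require Import Defs.
From HB Require Import structures.
From mathcomp Require Import all_boot all_order all_algebra.
From mathcomp Require Import all_classical all_reals all_analysis.
Import Order.TTheory GRing.Theory Num.Theory.
Import numFieldNormedType.Exports.
Local Open Scope classical_set_scope.
Local Open Scope ring_scope.
From mathcomp Require Import ring lra.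
Set Implicit Arguments. Unset Strict Implicit.
Section Cyl.
Variables (R : realType) (Sigma : finType) (s0 : Sigma).
Local Notation Om := (Omega s0).

Lemma cyl_meas (x : seq Sigma) : measurable (cyl s0 x : set Om).
Proof. by apply: sub_sigma_algebra; exists x. Qed.

Lemma cylE (nu : probability Om R) x : nu (cyl s0 x) = (cylm nu x)%:E.
Proof.
rewrite /cylm fineK // ge0_fin_numE ?measure_ge0 ?cyl_meas //.
by apply: (le_lt_trans (probability_le1 nu (cyl_meas x))); rewrite ltry.
Qed.

Lemma cylm_ge0 (nu : probability Om R) x : 0 <= cylm nu x.
Proof. by rewrite -lee_fin -cylE measure_ge0 ?cyl_meas. Qed.

Lemma cylm_le1 (nu : probability Om R) x : cylm nu x <= 1.
Proof. by rewrite -lee_fin -cylE; apply: probability_le1; exact: cyl_meas. Qed.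

Lemma cyl_nil : cyl s0 [::] = [set: Om].
Proof. by rewrite predeqE => w; split => // _ i. Qed.

Lemma cylm_nil (nu : probability Om R) : cylm nu [::] = 1.
Proof. by rewrite /cylm cyl_nil probability_setT. Qed.

Lemma cyl_rcons x s (w : Om) :
  cyl s0 (rcons x s) w <-> cyl s0 x w /\ w (size x) = s.
Proof.
split.
  move=> h; split.
    move=> i hi; rewrite h ?size_rcons 1?ltnW //.
    by rewrite nth_rcons hi.
  by rewrite h ?size_rcons // nth_rcons ltnn eqxx.
move=> [h1 h2] i; rewrite size_rcons ltnS leq_eqVlt => /orP[/eqP ->|hi].
  by rewrite nth_rcons ltnn eqxx.
by rewrite nth_rcons hi h1.
Qed.

Lemma big_setU_mem (I : eqType) (s : seq I) (F : I -> set Om) w :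
  (\big[setU/set0]_(i <- s) F i) w <-> exists i, i \in s /\ F i w.
Proof.
elim: s => [|a s IH]; first by rewrite big_nil; split => // -[? []].
rewrite big_cons; split.
  case=> [h|/IH [i [hi hw]]]; first by exists a; rewrite mem_head.
  by exists i; rewrite in_cons hi orbT.
move=> [i []]; rewrite in_cons => /orP[/eqP ->|hi] hw; first by left.
by right; apply/IH; exists i.
Qed.

Lemma measure_cyl_seq (nu : probability Om R) x (s : seq Sigma) : uniq s ->
  nu (\big[setU/set0]_(i <- s) cyl s0 (rcons x i)) =
  (\sum_(i <- s) cylm nu (rcons x i))%:E.
Proof.
elim: s => [|a s IH]; first by rewrite !big_nil measure0.
move=> /= /andP[ha hs]; rewrite !big_cons measureU ?cyl_meas //.
- rewrite EFinD; congr (_ + _)%E; [exact: cylE|exact: IH].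
- exact: cyl_meas.
- by apply: bigsetU_measurable => i _; exact: cyl_meas.
apply/seteqP; split => w // [/cyl_rcons [_ h1] /big_setU_mem [i [hi /cyl_rcons [_ h2]]]].
by move: ha; rewrite -h1 h2 hi.
Qed.

Lemma cyl_bigU x : cyl s0 x = \big[setU/set0]_(i <- enum Sigma) cyl s0 (rcons x i).
Proof.
apply/seteqP; split => w.
  by move=> h; apply/big_setU_mem; exists (w (size x)); rewrite mem_enum; split => //; apply/cyl_rcons.
by move/big_setU_mem => [i [_ /cyl_rcons []]].
Qed.

Lemma cylm_rcons (nu : probability Om R) x :
  cylm nu x = \sum_s cylm nu (rcons x s).
Proof.
apply/EFin_inj; rewrite -cylE {1}cyl_bigU measure_cyl_seq ?enum_uniq //.
by rewrite big_enum.
Qed.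

Lemma preimage_shift_cyl y :
  Defs.shift (s0:=s0) @^-1` cyl s0 y = \big[setU/set0]_(i <- enum Sigma) cyl s0 (i :: y).
Proof.
apply/seteqP; split => w.
  move=> h; apply/big_setU_mem; exists (w 0%N); rewrite mem_enum; split => //.
  by case => [|i] //= hi; apply: h.
move/big_setU_mem => [i [_ h]] j hj; exact: (h j.+1).
Qed.

Lemma cyl_cons_shift s y :
  cyl s0 [:: s] `&` Defs.shift (s0:=s0) @^-1` cyl s0 y = cyl s0 (s :: y).
Proof.
apply/seteqP; split => w.
  by move=> [h1 h2] [|i] /= hi; [exact: h1|exact: h2].
move=> h; split; first by case => // _; exact: (h 0%N).
by move=> j hj; exact: (h j.+1).
Qed.

Lemma mshift : measurable_fun setT (Defs.shift (s0:=s0) : Om -> Om).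
Proof.
apply: (@measurability _ _ Om Om setT _ (cylinders s0)); first by [].
move=> _ [_ [y _ <-] <-]; rewrite setTI preimage_shift_cyl.
by apply: (@bigsetU_measurable _ Om _ _ xpredT) => i _; exact: cyl_meas.
Qed.

End Cyl.
Section Tup.
Variables (R : realType) (Sigma : finType).

Lemma sum_cons n (F : seq Sigma -> R) :
  \sum_(t : n.+1.-tuple Sigma) F t = \sum_s \sum_(t : n.-tuple Sigma) F (s :: t).
Proof.
rewrite pair_big /=.
rewrite (reindex (fun p : Sigma * n.-tuple Sigma => [tuple of p.1 :: p.2])) /=.
  by [].
exists (fun t : n.+1.-tuple Sigma => (thead t, [tuple of behead t])).
  by move=> [s t] _ /=; congr (_, _); apply: val_inj.
by move=> t _; rewrite [RHS]tuple_eta.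
Qed.

Lemma sum_nil (F : seq Sigma -> R) :
  \sum_(t : 0.-tuple Sigma) F t = F [::].
Proof.
rewrite (eq_bigr (fun _ => F [::])); last by move=> t _; rewrite tuple0.
by rewrite sumr_const card_tuple expn0.
Qed.

Lemma sum_rcons n (F : seq Sigma -> R) :
  \sum_(t : n.+1.-tuple Sigma) F t = \sum_(t : n.-tuple Sigma) \sum_s F (rcons t s).
Proof.
elim: n F => [|n IH] F.
  rewrite sum_cons [RHS](sum_nil (fun t => \sum_s F (rcons t s))).
  by apply: eq_bigr => s _; exact: (sum_nil (fun t => F (s :: t))).
rewrite sum_cons (sum_cons n (fun t => \sum_s F (rcons t s))).
by apply: eq_bigr => s _; rewrite (IH (fun t => F (s :: t))).
Qed.

Definition consistent (f : seq Sigma -> R) := forall x, f x = \sum_s f (rcons x s).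
Arguments consistent : clear implicits.

Lemma consistent_sum f : consistent f -> forall n x,
  f x = \sum_(t : n.-tuple Sigma) f (x ++ t).
Proof.
move=> hf; elim=> [|n IH] x; first by rewrite (sum_nil (fun t => f (x ++ t))) cats0.
rewrite (sum_rcons n (fun t => f (x ++ t))) IH; apply: eq_bigr => t _.
by rewrite hf; apply: eq_bigr => s _; rewrite rcons_cat.
Qed.

End Tup.
Arguments consistent {R Sigma}.
Arguments sum_cons {R Sigma}.
Arguments sum_nil {R Sigma}.
Arguments sum_rcons {R Sigma}.
Arguments consistent_sum {R Sigma}.
Section Dist.
Variables (R : realType) (Sigma : finType).
Definition dist d (f g : seq Sigma -> R) := \sum_(y : d.-tuple Sigma) `|f y - g y|.

Lemma dist_ge0 d (f g : seq Sigma -> R) : 0 <= dist d f g.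
Proof. by apply: sumr_ge0 => y _. Qed.

Lemma dist_mono d (f g : seq Sigma -> R) : consistent f -> consistent g -> dist d f g <= dist d.+1 f g.
Proof.
move=> hf hg; rewrite /dist (sum_rcons d (fun y => `|f y - g y|)); apply: ler_sum => t _.
by rewrite hf hg -sumrB; apply: ler_norm_sum.
Qed.

Lemma key (f g : seq Sigma -> R) d eps s : consistent f -> consistent g -> (forall x, 0 <= g x) ->
  0 < g [:: s] -> eps <= g [:: s] / 2 -> dist d.+1 f g < eps ->
  g [:: s] / 2 < f [:: s] /\
  dist d (fun z => f (s :: z) / f [:: s]) (fun z => g (s :: z) / g [:: s])
    < 4 * eps / g [:: s].
Proof.
move=> hf hg g0 a0 epsa hd.
set a := g [:: s]; set m := f [:: s].
move: epsa a0; rewrite -/a => epsa a0.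
set S := \sum_(z : d.-tuple Sigma) `|f (s :: z) - g (s :: z)|.
have hS : S <= dist d.+1 f g.
  rewrite /dist (sum_cons d (fun y => `|f y - g y|)) (bigD1 s) //= lerDl.
  by apply: sumr_ge0 => i _; apply: sumr_ge0.
have hma : `|m - a| <= S.
  rewrite /m /a (consistent_sum _ hf d) (consistent_sum _ hg d) -sumrB /=.
  exact: ler_norm_sum.
have hd' : S < eps by apply: le_lt_trans hd.
have hm : a / 2 < m.
  have : a - m <= `|m - a| by rewrite distrC ler_norm.
  move: hd' hma epsa; rewrite -/a; lra.
have m0 : 0 < m by lra.
split => //.
have h1 : dist d (fun z => f (s :: z) / m) (fun z => g (s :: z) / a) <=
    \sum_(z : d.-tuple Sigma) (`|f (s :: z) - g (s :: z)| / m + g (s :: z) * (`|a - m| / (m * a))).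
  apply: ler_sum => z _.
  have -> : f (s :: z) / m - g (s :: z) / a =
      (f (s :: z) - g (s :: z)) / m + g (s :: z) * ((a - m) / (m * a)).
    by field; apply/andP; split; apply/lt0r_neq0.
  apply: (le_trans (ler_normD _ _)); apply: lerD.
    by rewrite normrM [`|m^-1|]ger0_norm // invr_ge0 ltW.
  rewrite normrM (ger0_norm (g0 _)) normrM [`|(m * a)^-1|]ger0_norm //.
  by rewrite invr_ge0 mulr_ge0 // ltW.
apply: (le_lt_trans h1).
rewrite big_split /= -mulr_suml -mulr_suml.
have -> : \sum_(z : d.-tuple Sigma) g (s :: z) = a.
  by rewrite /a (consistent_sum _ hg d).
rewrite -/S.
have -> : S / m + a * (`|a - m| / (m * a)) = (S + `|a - m|) / m.
  by field; apply/andP; split; apply/lt0r_neq0.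
rewrite distrC.
rewrite ltr_pdivrMr // mulrAC ltr_pdivlMr //.
have S0 : 0 <= S by apply: sumr_ge0.
have e0 : 0 < eps by apply: le_lt_trans hd'.
have p1 : (S + `|m - a|) * a <= (2 * S) * a by rewrite ler_wpM2r ?(ltW a0) //; lra.
have p2 : (2 * S) * a < (2 * eps) * a by rewrite ltr_pM2r //; lra.
have p3 : (2 * eps) * a < (2 * eps) * (2 * m) by rewrite ltr_pM2l //; lra.
lra.
Qed.
End Dist.
Arguments dist {R Sigma}.
Arguments dist_ge0 {R Sigma}.
Arguments dist_mono {R Sigma}.
Arguments key {R Sigma}.
Section Main.
Variables (R : realType) (Sigma : finType) (s0 : Sigma).
Local Notation Om := (Omega s0).
Implicit Types (P nu : probability Om R).

Lemma cylm_consistent nu : consistent (cylm nu).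
Proof. by move=> x; rewrite cylm_rcons. Qed.

Lemma mu_consistent P t : consistent (mu_cyl P t).
Proof.
move=> x; rewrite /mu_cyl -mulr_suml; congr (_ / _).
by rewrite cylm_rcons; apply: eq_bigr => s _; rewrite rcons_cat.
Qed.

Lemma inBE (f : seq Sigma -> R) d eps nu :
  inB f d eps nu = (dist d f (cylm nu) < eps).
Proof. by []. Qed.

Lemma sum_cylm P l : \sum_(t : l.-tuple Sigma) cylm P t = 1.
Proof.
by rewrite -(cylm_nil P) (consistent_sum _ (cylm_consistent P) l [::]).
Qed.

Lemma p_ldeps_ge0 P l d eps nu : 0 <= p_ldeps P l d eps nu.
Proof. by apply: sumr_ge0 => t _; apply: cylm_ge0. Qed.

Lemma p_ldeps_le1 P l d eps nu : p_ldeps P l d eps nu <= 1.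
Proof.
rewrite -(sum_cylm P l) /p_ldeps [X in _ <= X](bigID (fun t : l.-tuple Sigma =>
  (0 < cylm P t) && inB (mu_cyl P t) d eps nu)) /= lerDl.
by apply: sumr_ge0 => t _; apply: cylm_ge0.
Qed.

Lemma p_ldeps_mono_eps P l d e1 e2 nu : e1 <= e2 ->
  p_ldeps P l d e1 nu <= p_ldeps P l d e2 nu.
Proof.
move=> e12; rewrite /p_ldeps big_mkcond [X in _ <= X]big_mkcond /=.
apply: ler_sum => t _.
case: ifPn => [/andP [h1 h2]|_]; last by case: ifP => // _; apply: cylm_ge0.
by rewrite h1 /= !inBE (lt_le_trans _ e12) //; rewrite -inBE.
Qed.

Lemma p_ldeps_mono_d P l d e nu :
  p_ldeps P l d.+1 e nu <= p_ldeps P l d e nu.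
Proof.
rewrite /p_ldeps big_mkcond [X in _ <= X]big_mkcond /=.
apply: ler_sum => t _.
case: ifPn => [/andP [h1 h2]|_]; last by case: ifP => // _; apply: cylm_ge0.
rewrite h1 /= !inBE (le_lt_trans _ h2) //.
by apply: dist_mono; [apply: mu_consistent|apply: cylm_consistent].
Qed.

End Main.
Section Step.
Variables (R : realType) (Sigma : finType) (s0 : Sigma).
Local Notation Om := (Omega s0).
Variables (P nu nus : probability Om R) (sg : Sigma).
Hypothesis a0 : 0 < cylm nu [:: sg].
Hypothesis hnus : forall x, cylm nus x = cylm nu (sg :: x) / cylm nu [:: sg].
Local Notation a := (cylm nu [:: sg]).

Definition epsf (e : R) := Num.min (a / 2) (e * a / 4).

Lemma epsf_gt0 e : 0 < e -> 0 < epsf e.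
Proof.
move=> e0; rewrite /epsf lt_min; apply/andP; split.
  by rewrite divr_gt0.
by rewrite divr_gt0 // mulr_gt0.
Qed.

Lemma step l d e : 0 < e ->
  a / 2 * p_ldeps P l d.+1 (epsf e) nu <= p_ldeps P l.+1 d e nus.
Proof.
move=> e0.
set C := fun t : seq Sigma => (0 < cylm P t) && inB (mu_cyl P t) d e nus.
set G := fun t : seq Sigma => if C t then cylm P t else 0.
have G0 t : 0 <= G t by rewrite /G; case: ifP => // _; apply: cylm_ge0.
have -> : p_ldeps P l.+1 d e nus = \sum_(t : l.+1.-tuple Sigma) G t.
  by rewrite /p_ldeps big_mkcond.
rewrite (sum_rcons l G) /p_ldeps big_mkcond mulr_sumr /=.
apply: ler_sum => t _.
rewrite (bigD1 sg) //= -[X in X <= _]addr0; apply: lerD; last first.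
  by apply: sumr_ge0 => i _; apply: G0.
case: ifPn => [/andP [h1 h2]|_]; last by rewrite mulr0.
have ee1 : epsf e <= a / 2 by rewrite /epsf ge_min lexx.
have ee2 : epsf e <= e * a / 4 by rewrite /epsf ge_min lexx orbT.
have [hm hd] := key (mu_cyl P t) (cylm nu) d (epsf e) sg (mu_consistent P t) (cylm_consistent nu)
  (fun x => cylm_ge0 nu x) a0 ee1 h2.
set m := mu_cyl P t [:: sg] in hm hd.
have Pr : cylm P (rcons t sg) = cylm P t * m.
  rewrite /m /mu_cyl cats1 mulrC divfK //; exact: lt0r_neq0.
have m0 : 0 < m by apply: lt_trans hm; rewrite divr_gt0.
have C1 : C (rcons t sg).
  apply/andP; split; first by rewrite Pr mulr_gt0.
  rewrite inBE (_ : dist d _ _ = dist d (fun z => mu_cyl P t (sg :: z) / m)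
     (fun z => cylm nu (sg :: z) / a)); last first.
    apply: eq_bigr => z _; rewrite hnus; congr (`| _ - _ |).
    rewrite {1}/mu_cyl Pr cat_rcons /mu_cyl.
    by rewrite invfM mulrA.
  apply: (lt_le_trans hd).
  rewrite ler_pdivrMr //; lra.
rewrite /G C1 Pr mulrC ler_wpM2l ?ltW //; exact: cylm_ge0.
Qed.

End Step.
Section Liminf.
Variable R : realType.

Lemma cvgn_infs (u : R^nat) : bounded_fun u -> cvgn (infs u).
Proof.
move=> bu; apply: nondecreasing_is_cvgn.
  exact/nondecreasing_infs/bounded_fun_has_lbound.
exact: bounded_fun_has_ubound_infs.
Qed.

Lemma liminf_le (u v : R^nat) c k : bounded_fun u -> bounded_fun v -> 0 <= c ->
  (forall n, c * v n <= u (n + k)%N) -> c * limn_inf v <= limn_inf u.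
Proof.
move=> bu bv c0 huv.
have hi n : c * infs v n <= infs u (n + k)%N.
  apply: lb_le_inf; first by exists (u (n + k)%N); exists (n + k)%N; rewrite /=.
  move=> _ [j /= hj <-].
  have hjk : (k <= j)%N by apply: leq_trans hj; rewrite leq_addl.
  apply: (le_trans _ (_ : c * v (j - k)%N <= u j)); last first.
    by have := huv (j - k)%N; rewrite subnK.
  apply: ler_wpM2l => //; apply: ge_inf.
    exact/has_lbound_sdrop/bounded_fun_has_lbound.
  by exists (j - k)%N => //=; rewrite leq_subRL // addnC.
have cu := cvgn_infs bu; have cv := cvgn_infs bv.
have cu' : cvgn (fun n => infs u (n + k)%N).
  by apply/cvg_ex; exists (limn (infs u)); rewrite (cvg_shiftn k (infs u)).
have -> : limn_inf u = limn (fun n => infs u (n + k)%N).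
  apply/esym/cvg_lim => //; rewrite (cvg_shiftn k (infs u)); exact: cu.
have -> : c * limn_inf v = limn (cst c \* infs v).
  rewrite limM //; last exact: is_cvg_cst. congr (_ * _); apply/esym/cvg_lim => //; exact: cvg_cst.
apply: (@ler_lim nat \oo _ R).
- by apply: is_cvgM => //; exact: is_cvg_cst.
- exact: cu'.
- by apply: nearW => n; exact: hi.
Qed.

End Liminf.
Section G.
Variables (R : realType) (Sigma : finType) (s0 : Sigma).
Local Notation Om := (Omega s0).
Implicit Types (P nu : probability Om R).

Lemma bounded01 (u : R^nat) : (forall n, 0 <= u n <= 1) -> bounded_fun u.
Proof.
move=> h; rewrite /= /bounded_near; near=> M; move=> n _ /=.
have /andP [h0 h1] := h n.
rewrite ger0_norm //; apply: (le_trans h1).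
near: M; exact: nbhs_pinfty_ge.
Unshelve. all: by end_near.
Qed.

Lemma bounded_p P d e nu : bounded_fun (fun l => p_ldeps P l d e nu).
Proof. by apply: bounded01 => n; rewrite p_ldeps_ge0 p_ldeps_le1. Qed.

Lemma p_deps_ge0 P d e nu : 0 <= p_deps P d e nu.
Proof.
have := @liminf_le R _ _ 0 0 (bounded_p P d e nu) (bounded_p P d e nu) (lexx 0).
rewrite mul0r; apply => n; rewrite mul0r addn0; exact: p_ldeps_ge0.
Qed.

Lemma p_deps_mono_eps P d e1 e2 nu : e1 <= e2 -> p_deps P d e1 nu <= p_deps P d e2 nu.
Proof.
move=> e12.
have := @liminf_le R _ _ 1 0 (bounded_p P d e2 nu) (bounded_p P d e1 nu) ler01.
rewrite mul1r; apply => n; rewrite mul1r addn0; exact: p_ldeps_mono_eps.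
Qed.

Lemma p_deps_mono_d P d e nu : p_deps P d.+1 e nu <= p_deps P d e nu.
Proof.
have := @liminf_le R _ _ 1 0 (bounded_p P d e nu) (bounded_p P d.+1 e nu) ler01.
rewrite mul1r; apply => n; rewrite mul1r addn0; exact: p_ldeps_mono_d.
Qed.

Lemma p_deps_step P nu nus sg d e :
  0 < cylm nu [:: sg] ->
  (forall x, cylm nus x = cylm nu (sg :: x) / cylm nu [:: sg]) -> 0 < e ->
  cylm nu [:: sg] / 2 * p_deps P d.+1 (epsf nu sg e) nu <= p_deps P d e nus.
Proof.
move=> a0 hnus e0.
have := @liminf_le R _ _ (cylm nu [:: sg] / 2) 1 (bounded_p P d e nus)
  (bounded_p P d.+1 (epsf nu sg e) nu).
apply; first by rewrite divr_ge0 // ltW.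
by move=> n; rewrite addn1; apply: step.
Qed.

Definition gfun P nu d := lim ((fun eps => p_deps P d eps nu) x @[x --> (0:R)^'+]).

Let I := [set` Interval (BRight (0:R)) (BInfty R false)].

Lemma inI (e : R) : I e <-> 0 < e.
Proof. by rewrite /I /= in_itv /= andbT. Qed.

Lemma gfunE P nu d : gfun P nu d = inf [set p_deps P d e nu | e in I].
Proof.
apply: cvg_lim => //.
apply: nondecreasing_at_right_cvgr => //.
  by move=> x y _ _ xy; apply: p_deps_mono_eps.
by exists 0 => _ [e _ <-]; apply: p_deps_ge0.
Qed.

Lemma gfun_le P nu d e : 0 < e -> gfun P nu d <= p_deps P d e nu.
Proof.
move=> e0; rewrite gfunE; apply: ge_inf; last by exists e => //; apply/inI.
by exists 0 => _ [e' _ <-]; apply: p_deps_ge0.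
Qed.

Lemma gfun_ge P nu d c : (forall e, 0 < e -> c <= p_deps P d e nu) -> c <= gfun P nu d.
Proof.
move=> h; rewrite gfunE; apply: lb_le_inf; first by exists (p_deps P d 1 nu), 1 => //; apply/inI.
by move=> _ [e /inI e0 <-]; apply: h.
Qed.

Lemma gfun_ge0 P nu d : 0 <= gfun P nu d.
Proof. by apply: gfun_ge => e _; apply: p_deps_ge0. Qed.

Lemma gfun_mono P nu d : gfun P nu d.+1 <= gfun P nu d.
Proof.
apply: gfun_ge => e e0; apply: (le_trans (gfun_le _ _ _ e0)).
exact: p_deps_mono_d.
Qed.

Lemma gfun_noninc P nu : nonincreasing_seq (gfun P nu).
Proof. by apply/nonincreasing_seqP => n; apply: gfun_mono. Qed.

Lemma gfun_cvg P nu : cvgn (gfun P nu).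
Proof.
apply: nonincreasing_is_cvgn; first exact: gfun_noninc.
by exists 0 => _ [n _ <-]; apply: gfun_ge0.
Qed.

Lemma p_atomE P nu : p_atom P nu = limn (gfun P nu).
Proof. by []. Qed.

End G.

Lemma mnormalizeE d (T : measurableType d) (R : realType)
  (mu : {measure set T -> \bar R}) (P : probability T R) (r : R) :
  0 < r -> mu setT = r%:E -> forall A, mnormalize mu P A = (mu A * (r^-1)%:E)%E.
Proof.
move=> r0 hT A; rewrite /mnormalize hT eqe gt_eqF //=.
Qed.

Unset Implicit Arguments. Set Strict Implicit.

Theorem mainTheorem4 (R : realType) (Sigma : finType) (s0 : Sigma)
  (P : probability (Omega s0) R) :
  stationary P -> ergodic P ->
  forall (nu : probability (Omega s0) R) (sigma : Sigma),
    in_Qbar_plus P nu -> 0 < cylm nu [:: sigma] ->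
    exists nu_sigma : probability (Omega s0) R,
      (forall x : seq Sigma,
         cylm nu_sigma x = cylm nu (sigma :: x) / cylm nu [:: sigma]) /\
      in_Qbar_plus P nu_sigma.
Proof.
move=> _ _ nu sg [acc atom] a0.
have mC : measurable (cyl s0 [:: sg] : set (Omega s0)) by exact: cyl_meas.
have mf := @mshift _ s0.
unshelve eexists (@mnormalize _ (Omega s0) R (pushforward (mrestr nu mC) (@Defs.shift _ s0)) P).
  by [].
set nus := mnormalize _ P.
set a := cylm nu [:: sg].
have hnus : forall x, cylm nus x = cylm nu (sg :: x) / a.
  move=> x; rewrite [LHS]/cylm /nus /mnormalize /=.
  rewrite (@mnormalizeE _ _ _ _ P a a0).
    set T2 := (X in fine (X * _)%E).
    suff -> : T2 = (cylm nu (sg :: x))%:E by rewrite -EFinM.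
    rewrite /T2; change (nu (@Defs.shift _ s0 @^-1` cyl s0 x `&` cyl s0 [:: sg]) = (cylm nu (sg :: x))%:E).
    by rewrite setIC cyl_cons_shift cylE.
  change (nu (@Defs.shift _ s0 @^-1` setT `&` cyl s0 [:: sg]) = a%:E).
  by rewrite preimage_setT setTI cylE.
have ha2 : 0 < a / 2 by rewrite divr_gt0.
split; first exact: hnus.
split.
  move=> d e _ e0.
  have hpos := acc d.+1 (epsf nu sg e) (ltn0Sn d) (epsf_gt0 a0 e0).
  have hst := p_deps_step P d a0 hnus e0.
  exact: (lt_le_trans (mulr_gt0 ha2 hpos) hst).
have key : forall d, a / 2 * p_atom P nu <= gfun P nus d.
  move=> d; apply: gfun_ge => e e0.
  have hst := p_deps_step P d a0 hnus e0.
  apply: (le_trans _ hst).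
  apply: ler_wpM2l; first exact: ltW.
  apply: (le_trans _ (gfun_le P nu d.+1 (epsf_gt0 a0 e0))).
  rewrite p_atomE.
  exact: (nonincreasing_cvgn_ge (@gfun_noninc _ _ _ P nu) (@gfun_cvg _ _ _ P nu) d.+1).
rewrite p_atomE.
apply: (lt_le_trans _ (limr_ge (@gfun_cvg _ _ _ P nus) _)).
  exact: (mulr_gt0 ha2 atom).
exact: nearW.
Qed.
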